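(* Let $n\ge 3$. The characteristic polynomial $\det(xI-A)$ of the adjacency matrix $A$ of the power graph $P(G(n))$ of the gyrogroup $G(n)$ (defined in the context) is $$x^{2^{n-1}-1}(1+x)^{2^{n-1}-2}\left[x^3+(2-2^{n-1})x^2+(1-2^n)x+2^{2n-2}-2^n\right].$$
   Context: Let $n\ge 3$ be an integer and $m=2^{n-1}$. Let $P(n)=\{0,1,\dots,m-1\}$, $H(n)=\{m,m+1,\dots,2^n-1\}$ and $G(n)=P(n)\cup H(n)$. For $i,j\in G(n)$ let $t,s,k\in P(n)$ be the residues modulo $m$ (taken in $\{0,\dots,m-1\}$) of $i+j$, $i+(\frac m2-1)j$ and $(\frac m2+1)i+(\frac m2-1)j$, respectively, and define $i\oplus j=t$ if $i,j\in P(n)$; $i\oplus j=t+m$ if $i\in P(n),j\in H(n)$; $i\oplus j=s+m$ if $i\in H(n),j\in P(n)$; $i\oplus j=k$ if $i,j\in H(n)$. Then $(G(n),\oplus)$ is a gyrogroup with identity $e=0$. Powers are defined by $a^1=a$, $a^{k+1}=a^k\oplus a$. The power graph $P(G(n))$ is the simple undirected graph with vertex set $G(n)$ in which distinct vertices $u,v$ are adjacent if and only if $u^k=v$ or $v^k=u$ for some positive integer $k$. *)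

(* Defs.v *)
From HB Require Import structures.
From mathcomp Require Import all_boot all_order all_algebra.
From mathcomp Require Import boolp.
Set Implicit Arguments. Unset Strict Implicit. Unset Printing Implicit Defensive.
Import GRing.Theory.

Definition gm (n : nat) : nat := 2 ^ n.-1.

Definition gyro_op (n i j : nat) : nat :=
  let m := gm n in
  let t := (i + j) %% m in
  let s := (i + (m %/ 2 - 1) * j) %% m in
  let k := ((m %/ 2 + 1) * i + (m %/ 2 - 1) * j) %% m in
  if i < m then (if j < m then t else t + m)
  else (if j < m then s + m else k).

(* gyro_pow n a k = a^(k+1), with a^1 = a and a^(k+1) = a^k (+) a *)
Fixpoint gyro_pow (n a k : nat) : nat :=
  match k with
  | 0 => a
  | k'.+1 => gyro_op n (gyro_pow n a k') a
  end.

Definition is_power (n a b : nat) : Prop := exists k : nat, gyro_pow n a k = b.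

Definition pg_adj (n : nat) (u v : 'I_(2 ^ n)) : Prop :=
  u <> v /\ (is_power n (val u) (val v) \/ is_power n (val v) (val u)).

Definition pg_adjmx (n : nat) : 'M[int]_(2 ^ n) :=
  \matrix_(i, j) (if `[< @pg_adj n i j >] then 1%R else 0%R).

(* Main.v *)
Require Import Defs.
From mathcomp Require Import all_boot all_order all_algebra.
From mathcomp Require Import boolp zify ring.
Import GRing.Theory.
Definition adjb (m u v : nat) : bool :=
  (u != v) && ((u < m) && (v < m) || (u == 0%N) || (v == 0%N))%N.


Section Gyro.
Variable n' : nat.
Let n := n'.+3.
Let m := gm n.
Lemma m_eq : m = 2 ^ n'.+2. Proof. by []. Qed.
Lemma h_eq : m %/ 2 = 2 ^ n'.+1.
Proof. by rewrite m_eq expnS mulKn. Qed.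
Lemma m_pos : 0 < m. Proof. by rewrite m_eq expn_gt0. Qed.
Lemma hh : (m %/ 2 + 1 + (m %/ 2 - 1) = m)%N.
Proof. rewrite h_eq m_eq (expnS 2 n'.+1). have : 0 < 2 ^ n'.+1 by rewrite expn_gt0. lia. Qed.

Lemma op_PP i j : i < m -> j < m -> gyro_op n i j = (i + j) %% m.
Proof. by move=> hi hj; rewrite /gyro_op -/m hi hj. Qed.
Lemma op_PH i j : i < m -> m <= j -> gyro_op n i j = (i + j) %% m + m.
Proof. by move=> hi hj; rewrite /gyro_op -/m hi ltnNge hj. Qed.
Lemma op_HH i j : m <= i -> m <= j ->
  gyro_op n i j = ((m %/ 2 + 1) * i + (m %/ 2 - 1) * j) %% m.
Proof. by move=> hi hj; rewrite /gyro_op -/m ltnNge hi ltnNge hj. Qed.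

Lemma pow_P a k : a < m -> gyro_pow n a k = (k.+1 * a) %% m.
Proof.
move=> ha; elim: k => [|k IH] /=; first by rewrite mul1n modn_small.
rewrite IH op_PP ?ltn_pmod ?m_pos // modnDml; congr (_ %% _); nia.
Qed.

Lemma pow_H a k : m <= a < m + m -> gyro_pow n a k = if odd k then 0 else a.
Proof.
case/andP=> h1 h2; elim: k => [|k IH] //=.
rewrite IH; case: (odd k) => /=.
  rewrite op_PH ?m_pos // add0n -(subnK h1) modnDr modn_small //; lia.
rewrite op_HH // -mulnDl hh.
by rewrite modnMr.
Qed.

Lemma pow_cases a b : is_power n a b -> a < m + m ->
  (a < m /\ b < m) \/ b = 0 \/ b = a.
Proof.
case=> k <- ha; case: (ltnP a m) => h.
  by left; rewrite pow_P // ltn_pmod ?m_pos.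
rewrite pow_H ?h //; by case: (odd k); [right; left | right; right].
Qed.

Lemma pow_zero a : a < m + m -> is_power n a 0.
Proof.
move=> ha; case: (ltnP a m) => h.
  exists m.-1; rewrite pow_P // prednK ?m_pos //.
  exact: modnMr.
by exists 1; rewrite pow_H ?h.
Qed.

Lemma gcd_pow u v : 0 < u -> u < m -> gcdn u m %| v -> v < m -> exists k, gyro_pow n u k = v.
Proof.
move=> hu hum hd hv.
have [km kn Hb _] := egcdnP m hu.
case/dvdnP: hd => q eq.
exists (km * q + m).-1; rewrite pow_P // prednK; last first.
  have := m_pos; lia.
have -> : ((km * q + m) * u = (q * kn + u) * m + v)%N.
  rewrite eq; nia.
by rewrite modnMDl modn_small.
Qed.

Lemma gcd_p2 u : exists2 e, (e <= n'.+2)%N & gcdn u m = 2 ^ e.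
Proof. apply/dvdn_pfactor => //; rewrite -m_eq; exact: dvdn_gcdr. Qed.

Lemma cyc u v : u < m -> v < m -> is_power n u v \/ is_power n v u.
Proof.
move=> hu hv.
case: (posnP u) => [->|u0]; first by right; apply: pow_zero; lia.
case: (posnP v) => [->|v0]; first by left; apply: pow_zero; lia.
have [e _ He] := gcd_p2 u; have [e' _ He'] := gcd_p2 v.
case: (leqP e e') => hee.
  left; apply: gcd_pow => //.
  apply: (dvdn_trans _ (dvdn_gcdl v m)); rewrite He He'; exact: dvdn_exp2l.
right; apply: gcd_pow => //.
apply: (dvdn_trans _ (dvdn_gcdl u m)); rewrite He He'; apply: dvdn_exp2l; exact: ltnW.
Qed.

Lemma adj_iff u v : u < m + m -> v < m + m ->
  (u <> v /\ (is_power n u v \/ is_power n v u)) <-> adjb m u v.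
Proof.
move=> hu hv; rewrite /adjb; split.
  case=> neq huv; apply/andP; split; first by apply/eqP.
  case: huv => [/pow_cases/(_ hu)|/pow_cases/(_ hv)].
    case=> [[-> ->] //|[->|eq]]; [by rewrite eqxx !orbT| by case: neq].
  case=> [[-> ->] //|[->|eq]]; [by rewrite eqxx !orbT| by case: neq].
case/andP=> /eqP neq H; split => //.
case/orP: H => [/orP[/andP[a b]|/eqP->]|/eqP->].
- exact: cyc.
- by right; apply: pow_zero.
- by left; apply: pow_zero.
Qed.
End Gyro.

Section Det.
Local Open Scope ring_scope.


Lemma sum_delta (R : pzSemiRingType) k (F : 'I_k -> R) (j : 'I_k) :
  \sum_(r < k) F r * (r == j)%:R = F j.
Proof.
rewrite (bigD1 j) //= eqxx mulr1 big1 ?addr0 // => r /negbTE ->; by rewrite mulr0.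
Qed.

Lemma arrow_det (R : idomainType) l (a b c : R) : a != 0 ->
  \det (\matrix_(i, j < l.+2) (a *+ (i == j) - b - c *+ ((i == ord0) && (j == ord0)))) =
  a ^+ l * ((a - c) * (a - b *+ l.+2 - c) + c * (a - b - c)).
Proof.
move=> a0.
set M := \matrix_(i, j) _.
set Q := (a - c) * _ + _.
pose W : 'M[R]_(l.+2) := \matrix_(i, j) (if j == ord0 then (if i == ord0 then a else a - c)
                                          else (i == j)%:R).
pose L : 'M[R]_(l.+2) := \matrix_(i, j) ((i == j)%:R - ((j == ord0) && (i != ord0))%:R).
have rs i : \sum_(r < l.+2) M i r = a - b *+ l.+2 - c *+ (i == ord0).
  rewrite /M; under eq_bigr do rewrite mxE.
  rewrite !big_split /= sumrN sumr_const card_ord.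
  rewrite (bigD1 i) //= eqxx big1 ?addr0; last by move=> r /negbTE; rewrite eq_sym => ->.
  rewrite (bigD1 ord0) //= andbT big1 ?addr0; last by move=> r /negbTE ->; rewrite andbF mulr0n oppr0.
  by rewrite mulr1n.
have Wij r j : W r j = if j == ord0 then (if r == ord0 then a else a - c) else (r == j)%:R.
  by rewrite mxE.
have Mij r j : M r j = a *+ (r == j) - b - c *+ ((r == ord0) && (j == ord0)).
  by rewrite mxE.
have Lij r j : L r j = (r == j)%:R - ((j == ord0) && (r != ord0))%:R.
  by rewrite mxE.
clearbody M W L.
have MW i j : (M *m W) i j = if j == ord0 then Q else M i j.
  rewrite mxE; case: eqP => [->|/eqP nj].
    under eq_bigr do rewrite Wij eqxx.
    have -> : \sum_(r < l.+2) M i r * (if r == ord0 then a else a - c)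
       = (a - c) * \sum_(r < l.+2) M i r + c * M i ord0.
      rewrite mulr_sumr (bigD1 ord0) //= [in RHS](bigD1 ord0) //= ?eqxx.
      rewrite (eq_bigr (fun r => (a - c) * M i r)); last by move=> r /negbTE ->; rewrite mulrC.
      ring.
    rewrite rs /Q !Mij eqxx andbT; case: eqP => _ /=; ring.
  under eq_bigr do rewrite Wij (negbTE nj).
  exact: sum_delta.
have T i j : (L *m (M *m W)) i j =
   if i == ord0 then (M *m W) ord0 j else (if j == ord0 then 0 else a *+ (i == j)).
  rewrite mxE.
  under eq_bigr do rewrite Lij mulrBl.
  rewrite sumrB.
  rewrite (eq_bigr (fun r => (M *m W) r j * (r == i)%:R)); last by move=> r _; rewrite mulrC eq_sym.
  rewrite sum_delta.
  case: eqP => [->|/eqP ni].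
    by rewrite big1 ?subr0 // => r _; rewrite andbF mul0r.
  rewrite (bigD1 ord0) //= ?eqxx /= ?mul1r big1 ?addr0; last by move=> r /negbTE ->; rewrite mul0r.
  rewrite !MW; case: eqP => [_|/eqP nj]; first by rewrite subrr.
  have nj' : (ord0 == j) = false by rewrite eq_sym; exact: negbTE.
  rewrite !Mij (negbTE ni) (negbTE nj) nj' /= !mulr0n; ring.
have dL : \det L = 1.
  rewrite det_trig; last first.
    apply/is_trig_mxP => i j lij; rewrite Lij.
    have -> : (i == j) = false by apply/negbTE; rewrite neq_ltn lij.
    case: eqP => [ej|]; last by rewrite andFb subr0.
    by move: lij; rewrite ej ltn0.
  by rewrite big1 // => i _; rewrite Lij eqxx andbN subr0.
have nl i : (lift ord0 i == ord0 :> 'I_l.+2) = false.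
  by rewrite eq_sym; exact/negbTE/neq_lift.
have dW : \det W = a.
  rewrite det_trig; last first.
    apply/is_trig_mxP => i j lij; rewrite Wij; case: eqP => [ej|_].
      by move: lij; rewrite ej ltn0.
    have -> : (i == j) = false by apply/negbTE; rewrite neq_ltn lij.
    by [].
  rewrite big_ord_recl Wij !eqxx big1 ?mulr1 // => i _.
  by rewrite Wij nl eqxx.
have dT : \det (L *m (M *m W)) = Q * a ^+ l.+1.
  rewrite -det_tr det_trig; last first.
    apply/is_trig_mxP => i j lij; rewrite mxE T.
    have jn : (j == ord0) = false.
      by apply/negbTE; apply: contraTneq lij => ->; rewrite ltn0.
    have -> : (j == i) = false by apply/negbTE; rewrite neq_ltn lij orbT.
    by rewrite jn; case: ifP.
  rewrite big_ord_recl mxE T eqxx MW eqxx; congr (_ * _).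
  rewrite (eq_bigr (fun _ => a)); first by rewrite prodr_const card_ord.
  by move=> i _; rewrite mxE T nl eqxx.
rewrite !det_mulmx dL dW mul1r in dT.
apply: (mulIf a0); rewrite dT exprS; ring.
Qed.


Lemma stepA (R : idomainType) l (x : R) : x != 0 ->
  forall M : 'M[R]_(l.+2 + l.+2),
  (forall i j, M i j = x *+ (i == j :> nat) - (adjb l.+2 i j)%:R) ->
  \det M = \det (\matrix_(i, j < l.+2) (x * (x + 1) *+ (i == j) - x
                  - (l.+2)%:R *+ ((i == ord0) && (j == ord0)))).
Proof.
move=> x0 M HM.
set A := ulsubmx M; set B := ursubmx M; set C := dlsubmx M; set D := drsubmx M.
have HD : D = x%:M.
  apply/matrixP => i j; rewrite !mxE HM /adjb /= eqn_add2l.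
  have -> : (l.+2 + i < l.+2)%N = false by rewrite ltnNge leq_addr.
  by rewrite !addn_eq0 /= andbF subr0.
have HB i j : B i j = - ((i == ord0 :> 'I_l.+2)%:R).
  rewrite !mxE HM /adjb /=.
  have -> : (i == l.+2 + j :> nat) = false.
    by apply/negbTE; rewrite neq_ltn (leq_trans (ltn_ord i) (leq_addr _ _)).
  have -> : (l.+2 + j < l.+2)%N = false by rewrite ltnNge leq_addr.
  by rewrite /= andbF addn_eq0 /= orbF add0r.
have HC i j : C i j = - ((j == ord0 :> 'I_l.+2)%:R).
  rewrite !mxE HM /adjb /=.
  have -> : (l.+2 + i == j :> nat) = false.
    by apply/negbTE; rewrite eq_sym neq_ltn (leq_trans (ltn_ord j) (leq_addr _ _)).
  have -> : (l.+2 + i < l.+2)%N = false by rewrite ltnNge leq_addr.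
  by rewrite addn_eq0 /= add0r.
have HA i j : A i j = x *+ (i == j) - (i != j)%:R.
  by rewrite !mxE HM /adjb /= !ltn_ord /= andbT.
pose L := block_mx (x%:M : 'M[R]_(l.+2)) (- B) 0 (1%:M).
have LM : L *m M = block_mx (x *: A - B *m C) 0 C D.
  rewrite -[M in L *m M]submxK mulmx_block -/A -/B -/C -/D.
  rewrite !mul_scalar_mx !mul0mx.
  by rewrite !scale1r !add0r HD mul_mx_scalar ?mulNmx ?scalerN subrr.
have := congr1 determinant LM.
rewrite det_mulmx det_ublock det_lblock HD !det_scalar.
rewrite expr1n mulr1 mulrC.
move/(mulIf (expf_neq0 _ x0)) => ->.
congr (\det _); apply/matrixP => i j; rewrite !mxE.
rewrite (eq_bigr (fun _ => ((i == ord0) && (j == ord0))%:R)); last first.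
  by move=> r _; rewrite HB HC mulrNN -natrM mulnb.
rewrite HM /adjb /= !ltn_ord andbT sumr_const card_ord.
have [->|ne] := eqVneq i j.
  rewrite !eqxx /=; case: (_ && _) => /=; rewrite ?mulr1n ?mulr0n; ring.
have ne' : (val i == val j) = false by apply/negbTE.
rewrite ne' /=; case: (_ && _) => /=; rewrite ?mulr1n ?mulr0n; ring.
Qed.

End Det.

Local Open Scope ring_scope.

Theorem mainTheorem8 (n : nat) (hn : (3 <= n)%N) :
  char_poly (pg_adjmx n) =
  'X ^+ (2 ^ n.-1 - 1) * (1 + 'X) ^+ (2 ^ n.-1 - 2) *
  ('X ^+ 3 + ((2 : int) - (2 ^ n.-1)%:Z)%:P * 'X ^+ 2
   + ((1 : int) - (2 ^ n)%:Z)%:P * 'X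
   + ((2 ^ (2 * n - 2))%:Z - (2 ^ n)%:Z)%:P).
Proof.
case: n hn => [|[|[|n']]] // _.
have [l el] : exists l, (2 ^ n'.+2 = l.+2)%N.
  exists (2 ^ n'.+2 - 2)%N; rewrite !expnS; have := expn_gt0 2 n'; lia.
have e1 : (2 ^ n'.+3 = l.+2 + l.+2)%N by rewrite expnS el; lia.
have e2 : (2 ^ (2 * n'.+3 - 2) = l.+2 * l.+2)%N.
  by rewrite (_ : (2 * n'.+3 - 2 = n'.+2 + n'.+2)%N) ?expnD ?el //; lia.
have HA : forall i j, pg_adjmx n'.+3 i j = (adjb l.+2 i j)%:R.
  move=> i j; rewrite mxE.
  have hi : (val i < gm n'.+3 + gm n'.+3)%N by rewrite /gm /= el -e1 ltn_ord.
  have hj : (val j < gm n'.+3 + gm n'.+3)%N by rewrite /gm /= el -e1 ltn_ord.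
  have := @adj_iff n' _ _ hi hj; rewrite /gm /= el => H.
  have H' : @pg_adj n'.+3 i j <-> adjb l.+2 i j.
    rewrite -H; split; case=> ne h; split => //.
      by move=> e; apply: ne; apply: val_inj.
    by move=> e; apply: ne; rewrite e.
  case: (asboolP (@pg_adj n'.+3 i j)) => [/H' ->|nH] //.
  case E : (adjb l.+2 i j) => //.
  by case: nH; apply/H'; rewrite E.
rewrite [in RHS]e1 [in RHS]e2 [n'.+3.-1]/= [in RHS]el.
move: (pg_adjmx n'.+3) HA; rewrite e1 => A HA.
rewrite /char_poly (@stepA _ l 'X) ?polyX_eq0 //; last first.
  by move=> i j; rewrite !mxE HA rmorph_nat.
rewrite arrow_det; last first.
  rewrite mulf_neq0 ?polyX_eq0 //.
  by rewrite -polyC1 monic_neq0 // monicXaddC.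
rewrite !subSS !subn0.
rewrite -[Posz l.+2]natz -[Posz (l.+2 + l.+2)]natz -[Posz (l.+2 * l.+2)]natz.
rewrite !rmorphB /= !rmorph_nat !natrD !natrM polyC1 -[('X : {poly int}) *+ l.+2]mulr_natr.
rewrite exprMn exprS [1 + 'X]addrC.
move: ((l.+2)%:R : {poly int}) ('X : {poly int}) => c x.
move: (x ^+ l) ((x + 1) ^+ l) => p q.
ring.
Qed.
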